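(* Let $\mathcal{V}$ be a variety of $\Omega$-algebras and let $\sigma$ be an identity holding in $\mathcal{V}$. Then every algebra in the Mal'tsev product $\mathcal{V}\circ\mathcal{S}$ satisfies every identity in $\sigma^p$.
   Context: Standing conventions: $\Omega$-algebras are of a plural similarity type (no nullary operation symbols, at least one operation symbol of arity $\ge2$). $T_n$ is the set of $\Omega$-terms in $x_1,\dots,x_n$ in which all $n$ variables occur. An identity is regular if the same variables occur on both sides. $\mathcal{S}$ is the variety of $\Omega$-algebras satisfying all regular identities. $\mathcal{V}\circ\mathcal{S}$ is the class of $\Omega$-algebras $A$ having a congruence $\theta$ with $A/\theta\in\mathcal{S}$ and every $\theta$-class (a subalgebra) in $\mathcal{V}$. For an identity $\sigma$ of the form $u(y_1,\dots,y_n)=v(y_1,\dots,y_n)$ (variables of $u,v$ among $y_1,\dots,y_n$) and $m\ge1$, $\sigma^p_m$ is the set of all identities $u(r_1,\dots,r_n)=v(r_1,\dots,r_n)$ obtained by substituting $r_i(x_1,\dots,x_m)$ for $y_i$, where $r_1,\dots,r_n$ range over $T_m$; $\sigma^p=\bigcup_{m>0}\sigma^p_m$. *)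

(* Defs.v *)
From mathcomp Require Import all_boot.
From Stdlib Require Import ClassicalEpsilon.
Set Implicit Arguments. Unset Strict Implicit. Unset Printing Implicit Defensive.

Record signature := Signature { osym : Type; arity : osym -> nat }.

Definition plural (Sg : signature) : Prop :=
  (forall o : osym Sg, arity o <> 0) /\ (exists o : osym Sg, 2 <= arity o).

(* Omega-terms over variables indexed by nat (x_1, x_2, ... are Var 0, Var 1, ...). *)
Inductive term (Sg : signature) : Type :=
| Var : nat -> term Sg
| App : forall o : osym Sg, ('I_(arity o) -> term Sg) -> term Sg.
Arguments Var {Sg} _.
Arguments App {Sg} o _.

Fixpoint occurs {Sg} (j : nat) (t : term Sg) : Prop :=
  match t with
  | Var k => k = j
  | App o f => exists i, occurs j (f i)
  end.

Fixpoint tsubst {Sg} (s : nat -> term Sg) (t : term Sg) : term Sg :=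
  match t with
  | Var k => s k
  | App o f => App o (fun i => tsubst s (f i))
  end.

(* T_m: terms in x_1..x_m (Var 0 .. Var (m-1)) in which all m variables occur. *)
Definition in_T {Sg} (m : nat) (t : term Sg) : Prop :=
  forall j, occurs j t <-> j < m.

Record algebra (Sg : signature) := Algebra {
  car :> Type;
  op : forall o : osym Sg, ('I_(arity o) -> car) -> car }.

Arguments op {Sg} {a} o _.
Fixpoint eval {Sg} {A : algebra Sg} (e : nat -> A) (t : term Sg) : A :=
  match t with
  | Var k => e k
  | App o f => op o (fun i => eval e (f i))
  end.

Definition identity (Sg : signature) := (term Sg * term Sg)%type.

Definition satisfies {Sg} (A : algebra Sg) (id : identity Sg) : Prop :=
  forall e : nat -> A, eval e id.1 = eval e id.2.

Definition regular {Sg} (id : identity Sg) : Prop :=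
  forall j, occurs j id.1 <-> occurs j id.2.

Definition is_variety {Sg} (V : algebra Sg -> Prop) : Prop :=
  exists Sigma : identity Sg -> Prop,
    forall A, V A <-> (forall id, Sigma id -> satisfies A id).

Definition inS {Sg} (A : algebra Sg) : Prop :=
  forall id : identity Sg, regular id -> satisfies A id.

Definition congruence {Sg} (A : algebra Sg) (th : A -> A -> Prop) : Prop :=
  (forall a, th a a) /\ (forall a b, th a b -> th b a) /\
  (forall a b c, th a b -> th b c -> th a c) /\
  (forall o (f g : 'I_(arity o) -> A), (forall i, th (f i) (g i)) ->
      th (op o f) (op o g)).

Definition qcar {Sg} (A : algebra Sg) (th : A -> A -> Prop) : Type :=
  {P : A -> Prop | exists a, P = th a}.

Definition qclass {Sg} (A : algebra Sg) (th : A -> A -> Prop) (a : A)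
  : qcar th := exist _ (th a) (ex_intro _ a erefl).

Definition qrep {Sg} (A : algebra Sg) (th : A -> A -> Prop) (c : qcar th) : A :=
  proj1_sig (constructive_indefinite_description _ (proj2_sig c)).

Definition quotient {Sg} (A : algebra Sg) (th : A -> A -> Prop) : algebra Sg :=
  @Algebra Sg (qcar th)
    (fun o F => qclass th (op o (fun i => qrep (F i)))).

Definition closed {Sg} (A : algebra Sg) (P : A -> Prop) : Prop :=
  forall o (f : 'I_(arity o) -> A), (forall i, P (f i)) -> P (op o f).

Definition subalg {Sg} (A : algebra Sg) (P : A -> Prop) (H : closed P)
  : algebra Sg :=
  @Algebra Sg {a : A | P a}
    (fun o F => exist _ (op o (fun i => proj1_sig (F i)))
                        (H o _ (fun i => proj2_sig (F i)))).

Definition maltsev_S {Sg} (V : algebra Sg -> Prop) (A : algebra Sg) : Prop :=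
  exists th : A -> A -> Prop,
    congruence th /\ inS (quotient th) /\
    (forall a : A, exists H : closed (th a), V (subalg H)).

(* Main.v *)
Require Import Defs.
From mathcomp Require Import all_boot.
From Stdlib Require Import FunctionalExtensionality PropExtensionality ProofIrrelevance ClassicalEpsilon.

Lemma eval_ext {Sg} (A : algebra Sg) (e1 e2 : nat -> A) (t : term Sg) :
  (forall j, occurs j t -> e1 j = e2 j) -> eval e1 t = eval e2 t.
Proof.
elim: t => [k|o f IH] H /=; first by apply: H.
congr (op o _); apply: functional_extensionality => i; apply: IH => j Hj.
by apply: H; exists i.
Qed.

Lemma eval_tsubst {Sg} (A : algebra Sg) (e : nat -> A) s (t : term Sg) :
  eval e (tsubst s t) = eval (fun k => eval e (s k)) t.
Proof.
elim: t => [k|o f IH] //=.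
by congr (op o _); apply: functional_extensionality => i; apply: IH.
Qed.

Lemma eval_sub {Sg} (A : algebra Sg) (P : A -> Prop) (H : Defs.closed P) g (t : term Sg) :
  proj1_sig (@eval _ (subalg H) g t) = eval (fun k => proj1_sig (g k)) t.
Proof.
elim: t => [k|o f IH] //=.
by congr (op o _); apply: functional_extensionality => i; apply: IH.
Qed.

Section Q.
Variables (Sg : signature) (A : algebra Sg) (th : A -> A -> Prop).
Hypothesis Hc : congruence th.

Lemma qclass_eq x y : th x y -> qclass th x = qclass th y.
Proof.
move=> Hxy; case: Hc => [Hr [Hs [Ht _]]].
have E : th x = th y.
  apply: functional_extensionality => z; apply: propositional_extensionality.
  split => H; [apply: Ht (Hs _ _ Hxy) H | apply: Ht Hxy H].
rewrite /qclass; move: (ex_intro _ x _) (ex_intro _ y _); rewrite E => p q.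
by rewrite (proof_irrelevance _ p q).
Qed.

Lemma qclass_inv x y : qclass th x = qclass th y -> th x y.
Proof.
move=> /(f_equal (@proj1_sig _ _)) /= E.
case: Hc => [Hr _]; by rewrite E.
Qed.

Lemma qrep_rel a : th a (qrep (qclass th a)).
Proof.
rewrite /qrep; case: (constructive_indefinite_description _ _) => b /= E.
case: Hc => [Hr _]; by rewrite E.
Qed.

Lemma eval_q (e : nat -> A) (t : term Sg) :
  @eval _ (quotient th) (fun k => qclass th (e k)) t = qclass th (eval e t).
Proof.
elim: t => [k|o f IH] //=.
apply: qclass_eq; case: Hc => [_ [Hs [_ Hop]]]; apply: Hop => i.
have := IH i; rewrite /quotient /= => ->.
by apply: Hs; apply: qrep_rel.
Qed.
End Q.

Theorem lemma2p6 (Sg : signature) (Hpl : plural Sg)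
  (V : algebra Sg -> Prop) (HV : is_variety V)
  (n : nat) (u v : term Sg)
  (Hu : forall j, occurs j u -> j < n) (Hv : forall j, occurs j v -> j < n)
  (Hsig : forall B, V B -> satisfies B (u, v))
  (m : nat) (Hm : 1 <= m) (r : nat -> term Sg)
  (Hr : forall i, i < n -> in_T m (r i))
  (A : algebra Sg) (HA : maltsev_S V A) :
  satisfies A (tsubst r u, tsubst r v).
Proof.
case: HA => th [Hc [HS Hcl]] e /=.
have Key : forall t1 t2, in_T m t1 -> in_T m t2 -> th (eval e t1) (eval e t2).
  move=> t1 t2 H1 H2; apply: (@qclass_inv Sg A th Hc).
  rewrite -(@eval_q Sg A th Hc e t1) -(@eval_q Sg A th Hc e t2).
  apply: (HS (t1, t2)) => j /=.
  by rewrite H1 H2.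
set a := eval e (r 0).
set val := fun i => if i < n then eval e (r i) else a.
have Hval : forall i, th a (val i).
  move=> i; rewrite /val; case: ifP => Hi.
    apply: Key; apply: Hr => //; by apply: leq_ltn_trans Hi.
  by case: Hc.
case: (Hcl a) => H HVB.
pose g := fun i => exist (th a) (val i) (Hval i) : subalg H.
have := Hsig _ HVB g => /= /(f_equal (@proj1_sig _ _)).
rewrite !eval_sub /= !eval_tsubst => E.
rewrite (@eval_ext _ _ _ val u); last first.
  by move=> j /Hu Hj; rewrite /val Hj.
rewrite E; apply: eval_ext => j /Hv Hj; by rewrite /val Hj.
Qed.
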